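(* For each $t\in\{4,5,6,7\}$ and each $s\in\{1,3,5,7\}$, $P_{2^t}$ divides $Q_{2^t+s}$.
   Context: $Q_q$ denotes the $q$-dimensional hypercube graph (vertices are $q$-tuples of $0$'s and $1$'s, adjacent iff they differ in exactly one coordinate). $P_m$ denotes the path with $m$ edges. For graphs $H$ and $G$, ''$H$ divides $G$'' means there is a collection of subgraphs $H_i$ of $G$, each isomorphic to $H$, such that $E(G)$ is the disjoint union of the edge sets $E(H_i)$. *)

(* Defs.v *)
From mathcomp Require Import all_boot.
Set Implicit Arguments. Unset Strict Implicit. Unset Printing Implicit Defensive.

Definition edges (T : finType) (e : rel T) : {set {set T}} :=
  [set [set x; y] | x in T, y in T & e x y].

Definition edge_image (T1 T2 : finType) (f : T1 -> T2) (E : {set {set T1}})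
  : {set {set T2}} := [set f @: (A : {set T1}) | A in E].

(* A copy of H in G = subgraph of G isomorphic to H, presented as the image
   of an injective graph homomorphism f : V(H) -> V(G); its edge set is
   f(E(H)). *)
Definition is_copy (T1 T2 : finType) (eH : rel T1) (eG : rel T2)
  (f : {ffun T1 -> T2}) : Prop :=
  injective f /\ (forall x y, eH x y -> eG (f x) (f y)).

(* H divides G: a collection of copies of H in G whose edge sets partition
   E(G) (every edge of G lies in exactly one copy's edge set). *)
Definition divides (T1 T2 : finType) (eH : rel T1) (eG : rel T2) : Prop :=
  exists s : seq {ffun T1 -> T2},
    (forall f, f \in s -> is_copy eH eG f) /\
    (forall E, E \in edges eG ->
       count (fun f : {ffun T1 -> T2} => E \in edge_image f (edges eH)) s = 1).

Definition cube_rel (q : nat) : rel {ffun 'I_q -> bool} :=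
  fun x y => #|[set i | x i != y i]| == 1.

(* Path P_m with m edges: vertices 0..m, i ~ j iff |i - j| = 1. *)
Definition path_rel (m : nat) : rel 'I_m.+1 :=
  fun i j => (i.+1 == j :> nat) || (j.+1 == i :> nat).
Arguments path_rel m : clear implicits.
Arguments cube_rel q : clear implicits.

(* Main.v *)
Require Import Defs.
From mathcomp Require Import all_boot zify.
Set Implicit Arguments. Unset Strict Implicit. Unset Printing Implicit Defensive.

Section Gen.
Variable T : eqType.
Implicit Types (p q : seq T) (x y : T).
Definition pairs p : seq (T * T) := zip p (behead p).
Definition covP (P : seq (T * T)) x y : bool := ((x, y) \in P) || ((y, x) \in P).
Definition covers p x y : bool := covP (pairs p) x y.
Definition ok_path (e : rel T) p := uniq p && all (fun c : T * T => e c.1 c.2) (pairs p).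

Lemma pairs_cons2 x y p : pairs [:: x, y & p] = (x, y) :: pairs (y :: p).
Proof. by []. Qed.

Lemma pairs_glue x p q : pairs ((x :: p) ++ q) = pairs (x :: p) ++ pairs (last x p :: q).
Proof.
elim: p x => [|y p IH] x /=; first by case: q.
by move: (IH y); rewrite /pairs /= => ->.
Qed.

Lemma covP_cat P1 P2 x y : covP (P1 ++ P2) x y = covP P1 x y || covP P2 x y.
Proof. by rewrite /covP !mem_cat; case: (_ \in P1); case: (_ \in P1); case: (_ \in P2); case: (_ \in P2). Qed.


Lemma size_pairs p : size (pairs p) = (size p).-1.
Proof. by rewrite /pairs size_zip size_behead; case: (size p) => //= n; apply/minn_idPr; exact: leqnSn. Qed.

Lemma nth_pairs x0 p i : i < (size p).-1 ->
  nth (x0, x0) (pairs p) i = (nth x0 p i, nth x0 p i.+1).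
Proof.
elim: p i => [|x [|y p] IH] [|i] //= hi.
by rewrite -/(pairs _) (IH i).
Qed.

Lemma mem_pairs x0 p x y : (x, y) \in pairs p ->
  exists2 i, i < (size p).-1 & x = nth x0 p i /\ y = nth x0 p i.+1.
Proof.
move/(nthP (x0, x0)) => [i]; rewrite size_pairs => hi.
by rewrite nth_pairs // => -[<- <-]; exists i.
Qed.

Lemma count_sum (a : pred T) s : count a s = \sum_(x <- s) a x.
Proof. by elim: s => [|x s IH]; rewrite ?big_nil ?big_cons //= IH. Qed.

End Gen.

Lemma pairs_map (T U : eqType) (f : T -> U) p :
  pairs (map f p) = map (fun c : T * T => (f c.1, f c.2)) (pairs p).
Proof. by elim: p => [|x [|y p] IH] //=; move: IH; rewrite /pairs /= => ->. Qed.


Notation W n := (n.-tuple bool).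
Definition ndiff (x y : seq bool) := count (fun c : bool * bool => c.1 != c.2) (zip x y).
Definition hd1 (x y : seq bool) := ndiff x y == 1.
Definition cb n : rel (W n) := fun x y => hd1 x y.

Lemma ndiff_cat x1 x2 y1 y2 : size x1 = size x2 ->
  ndiff (x1 ++ y1) (x2 ++ y2) = ndiff x1 x2 + ndiff y1 y2.
Proof. by move=> h; rewrite /ndiff zip_cat // count_cat. Qed.

Lemma ndiff0 x y : size x = size y -> (ndiff x y == 0) = (x == y).
Proof.
elim: x y => [|a x IH] [|b y] //= [] /IH hs.
by rewrite /ndiff /= -/(ndiff x y) eqseq_cons -hs; case: a; case: b.
Qed.

Lemma ndiffC x y : ndiff x y = ndiff y x.
Proof. by elim: x y => [|a x IH] [|b y] //=; rewrite /ndiff /= -/(ndiff _ _) IH eq_sym. Qed.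

Lemma cb_sym n : symmetric (@cb n).
Proof. by move=> x y; rewrite /cb /hd1 ndiffC. Qed.

Lemma cb_irr n (x : W n) : cb x x = false.
Proof. by rewrite /cb /hd1; move: (ndiff0 (erefl (size x))); rewrite eqxx => /eqP ->. Qed.

Section Join.
Variables a b : nat.
Definition jn (x : W a) (y : W b) : W (a + b) := [tuple of x ++ y].
Definition lp (u : W (a + b)) : W a := [tuple tnth u (lshift b i) | i < a].
Definition rp (u : W (a + b)) : W b := [tuple tnth u (rshift a j) | j < b].

Lemma lpK x y : lp (jn x y) = x.
Proof. by apply: eq_from_tnth => i; rewrite tnth_mktuple tnth_lshift. Qed.
Lemma rpK x y : rp (jn x y) = y.
Proof. by apply: eq_from_tnth => i; rewrite tnth_mktuple tnth_rshift. Qed.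
Lemma jnK u : jn (lp u) (rp u) = u.
Proof.
apply: eq_from_tnth => k; rewrite -(splitK k); case: (split k) => [i|j] /=.
  by rewrite tnth_lshift tnth_mktuple.
by rewrite tnth_rshift tnth_mktuple.
Qed.
Lemma jn_inj x1 y1 x2 y2 : jn x1 y1 = jn x2 y2 -> x1 = x2 /\ y1 = y2.
Proof. move=> h; split; [have := congr1 lp h; rewrite !lpK | have := congr1 rp h; rewrite !rpK] =>  //. Qed.
Lemma jn_injl y : injective (jn^~ y).
Proof. by move=> x1 x2 /jn_inj []. Qed.
Lemma jn_injr x : injective (jn x).
Proof. by move=> y1 y2 /jn_inj []. Qed.

Lemma cb_jn x1 y1 x2 y2 :
  cb (jn x1 y1) (jn x2 y2) = (cb x1 x2 && (y1 == y2)) || ((x1 == x2) && cb y1 y2).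
Proof.
rewrite /cb /hd1 /= ndiff_cat ?size_tuple //.
have h1 := ndiff0 (etrans (size_tuple x1) (esym (size_tuple x2))).
have h2 := ndiff0 (etrans (size_tuple y1) (esym (size_tuple y2))).
have e1 : (x1 == x2) = (x1 == x2 :> seq bool) by [].
have e2 : (y1 == y2) = (y1 == y2 :> seq bool) by [].
rewrite e1 e2 -h1 -h2.
case: (ndiff x1 x2) => [|[|d1]]; case: (ndiff y1 y2) => [|[|d2]] //=.
Qed.

Lemma sum_jn (F : W (a + b) -> nat) :
  \sum_(u : W (a + b)) F u = \sum_(x : W a) \sum_(y : W b) F (jn x y).
Proof.
rewrite pair_big /=.
rewrite (reindex (fun c : W a * W b => jn c.1 c.2)) //=.
exists (fun u => (lp u, rp u)) => [[x y]|u] _ /=; first by rewrite lpK rpK.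
exact: jnK.
Qed.
End Join.
Arguments jn {a b} x y.
Arguments jn_injl {a b} y.
Arguments jn_injr {a b} x.

Lemma cov_map_inj (T U : eqType) (f : T -> U) p x y : injective f ->
  covers (map f p) (f x) (f y) = covers p x y.
Proof.
move=> fi; rewrite /covers /covP pairs_map.
have fpi : injective (fun c : T * T => (f c.1, f c.2)).
  by move=> [a1 a2] [b1 b2] /= [/fi -> /fi ->].
by rewrite -[(f x, f y)]/((fun c : T * T => (f c.1, f c.2)) (x, y)) -[(f y, f x)]/((fun c : T * T => (f c.1, f c.2)) (y, x)) !(mem_map fpi).
Qed.

Lemma cov_map_mem (T U : eqType) (f : T -> U) p u v :
  covers (map f p) u v -> (exists x, u = f x) /\ (exists y, v = f y).
Proof.
rewrite /covers /covP pairs_map => /orP [] /mapP [[c1 c2] _ /= [-> ->]].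
  by split; eexists.
by split; eexists.
Qed.

Section Lift.
Variables a b : nat.
Implicit Types (x : W a) (y : W b).

Lemma cov_layer (P : seq (W a)) y0 x1 y1 x2 y2 :
  covers (map (jn^~ y0) P) (jn x1 y1) (jn x2 y2) = [&& y1 == y0, y2 == y0 & covers P x1 x2].
Proof.
case: (y1 =P y0) => [->|ne]; last first.
  apply/negP => /cov_map_mem [[x /jn_inj [_ e]] _]; exact: ne.
case: (y2 =P y0) => [->|ne]; last first.
  apply/negP => /cov_map_mem [_ [x /jn_inj [_ e]]]; exact: ne.
by rewrite cov_map_inj //; apply: jn_injl.
Qed.

Lemma cov_col (Q : seq (W b)) x0 x1 y1 x2 y2 :
  covers (map (jn x0) Q) (jn x1 y1) (jn x2 y2) = [&& x1 == x0, x2 == x0 & covers Q y1 y2].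
Proof.
case: (x1 =P x0) => [->|ne]; last first.
  apply/negP => /cov_map_mem [[y /jn_inj [e _]] _]; exact: ne.
case: (x2 =P x0) => [->|ne]; last first.
  apply/negP => /cov_map_mem [_ [y /jn_inj [e _]]]; exact: ne.
by rewrite cov_map_inj //; apply: jn_injr.
Qed.

Lemma ok_map (T U : eqType) (e1 : rel T) (e2 : rel U) (f : T -> U) p :
  injective f -> (forall c d, e2 (f c) (f d) = e1 c d) -> ok_path e2 (map f p) = ok_path e1 p.
Proof.
move=> fi fe; rewrite /ok_path map_inj_uniq // pairs_map all_map.
by congr andb; apply: eq_all => -[c d] /=; rewrite fe.
Qed.

Lemma cb_layer y x1 x2 : cb (jn x1 y) (jn x2 y) = cb x1 x2.
Proof. by rewrite cb_jn eqxx cb_irr andbT !andbF orbF. Qed.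
Lemma cb_col x y1 y2 : cb (jn x y1) (jn x y2) = cb y1 y2.
Proof. by rewrite cb_jn eqxx cb_irr /=. Qed.

Lemma ok_layer y P : ok_path (@cb (a + b)) (map (jn^~ y) P) = ok_path (@cb a) P.
Proof. apply: ok_map; [exact: jn_injl | exact: cb_layer]. Qed.
Lemma ok_col x Q : ok_path (@cb (a + b)) (map (jn x) Q) = ok_path (@cb b) Q.
Proof. apply: ok_map; [exact: jn_injr | exact: cb_col]. Qed.
End Lift.

Lemma sum_inj_eq1 (T : finType) (f : T -> T) (u : T) : injective f ->
  \sum_(x : T) (f x == u) = 1.
Proof.
move=> fi; have [g fg gf] := injF_bij fi.
rewrite (bigD1 (g u)) //= gf eqxx big1 // => x nx.
by case: eqP => // ex; case/negP: nx; rewrite -ex fg.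
Qed.

Definition Bstr a k (G : W a -> seq (W a)) :=
  [/\ forall z, size (G z) = k,
      injective (fun z => last z (G z)),
      forall z, ok_path (@cb a) (z :: G z)
    & forall x y, cb x y -> \sum_(z : W a) covers (z :: G z) x y = 1].

Section Bprod.
Variables (a b ka kb : nat) (Ga : W a -> seq (W a)) (Gb : W b -> seq (W b)).
Hypotheses (Ha : Bstr ka Ga) (Hb : Bstr kb Gb).

Definition Gab (u : W (a + b)) : seq (W (a + b)) :=
  map (jn^~ (rp u)) (Ga (lp u)) ++ map (jn (last (lp u) (Ga (lp u)))) (Gb (rp u)).

Lemma Gab_path x y : jn x y :: Gab (jn x y) =
  map (jn^~ y) (x :: Ga x) ++ map (jn (last x (Ga x))) (Gb y).
Proof. by rewrite /Gab lpK rpK. Qed.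

Lemma Gab_pairs x y : pairs (jn x y :: Gab (jn x y)) =
  pairs (map (jn^~ y) (x :: Ga x)) ++ pairs (map (jn (last x (Ga x))) (y :: Gb y)).
Proof. by rewrite Gab_path /= pairs_glue (last_map (jn^~ y)). Qed.

Lemma Gab_last x y : last (jn x y) (Gab (jn x y)) = jn (last x (Ga x)) (last y (Gb y)).
Proof.
by rewrite /Gab lpK rpK last_cat (last_map (jn^~ y)) (last_map (jn (last x (Ga x)))).
Qed.

Lemma Bprod : Bstr (ka + kb) Gab.
Proof.
case: Ha => sa ia oka cva; case: Hb => sb ib okb cvb.
split.
- by move=> u; rewrite /Gab size_cat !size_map sa sb.
- move=> u v; rewrite -(jnK u) -(jnK v) !Gab_last => /jn_inj [/ia e1 /ib e2].
  by rewrite e1 e2.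
- move=> u; rewrite -(jnK u); set x := lp u; set y := rp u.
  rewrite /ok_path Gab_pairs Gab_path all_cat.
  have o1 : ok_path (@cb (a+b)) (map (jn^~ y) (x :: Ga x)) by rewrite ok_layer.
  have o2 : ok_path (@cb (a+b)) (map (jn (last x (Ga x))) (y :: Gb y)) by rewrite ok_col.
  move: o1 o2; rewrite /ok_path => /andP [u1 a1] /andP [u2 a2]; rewrite a1 a2 andbT.
  rewrite cat_uniq u1 /=; move: u2 => /= /andP [_ ->]; rewrite andbT.
  rewrite andbT; apply/hasPn => w /mapP [w' w'in ->]; apply/negP.
  change (jn (last x (Ga x)) w' \in map (jn^~ y) (x :: Ga x) -> False); move=> /mapP [x' _ /jn_inj [_ ey]].
  move: w'in; rewrite ey => hy; by move: (okb y) => /andP [] /= /andP [] /negP.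
- move=> u v; rewrite -(jnK u) -(jnK v); set x1 := lp u; set y1 := rp u;
    set x2 := lp v; set y2 := rp v.
  rewrite sum_jn cb_jn => /orP [] /andP [h1 h2].
  + move/eqP: h2 => e; rewrite -e.
    have nx : x1 != x2 by apply: contraTneq h1 => ->; rewrite cb_irr.
    rewrite -(cva _ _ h1); apply: eq_bigr => x _.
    have key : forall y, covers (jn x y :: Gab (jn x y)) (jn x1 y1) (jn x2 y1) =
        (y1 == y) && covers (x :: Ga x) x1 x2.
      move=> y; rewrite /covers Gab_pairs covP_cat -!/(covers _ _ _) cov_layer cov_col.
      have -> : [&& x1 == last x (Ga x), x2 == last x (Ga x) & covers (y :: Gb y) y1 y1] = false.
        by case: (x1 =P _) => //= <-; rewrite eq_sym (negbTE nx).
      by rewrite andbA andbb orbF.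
    under eq_bigr do rewrite key.
    rewrite (bigD1 y1) //= eqxx big1 ?addn0 // => y ny.
    by rewrite eq_sym (negbTE ny).
  + move/eqP: h1 => e; rewrite -e.
    have ny : y1 != y2 by apply: contraTneq h2 => ->; rewrite cb_irr.
    have -> : \sum_(x : W a) \sum_(y : W b) covers (jn x y :: Gab (jn x y)) (jn x1 y1) (jn x1 y2)
       = \sum_(x : W a) ((last x (Ga x) == x1) * \sum_(y : W b) covers (y :: Gb y) y1 y2).
      apply: eq_bigr => x _; rewrite big_distrr /=; apply: eq_bigr => y _.
      rewrite /covers Gab_pairs covP_cat -!/(covers _ _ _) cov_layer cov_col.
      have -> : [&& y1 == y, y2 == y & covers (x :: Ga x) x1 x1] = false.
        by case: (y1 =P y) => //= <-; rewrite eq_sym (negbTE ny).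
      by rewrite /= andbA andbb eq_sym; case: (_ == _); case: (covers _ _ _).
    rewrite cvb //; under eq_bigr do rewrite muln1; exact: sum_inj_eq1.
Qed.
End Bprod.

Lemma B0 : Bstr 0 (fun _ : W 0 => [::]).
Proof.
split; [by [] | by move=> x y | by [] | ].
by move=> x y; rewrite /cb /hd1 (size0nil (size_tuple x)) (size0nil (size_tuple y)).
Qed.

Definition rot2 (z : W 2) : W 2 := [tuple ~~ tnth z (inord 1); tnth z (inord 0)].

Lemma W2E (z : W 2) : z = [tuple tnth z (inord 0); tnth z (inord 1)].
Proof.
apply: eq_from_tnth => i; case: i => [[|[|i]] hi] //=.
- by rewrite [in RHS](tnth_nth false) /=; congr tnth; apply: val_inj; rewrite /= inordK.
- by rewrite [in RHS](tnth_nth false) /=; congr tnth; apply: val_inj; rewrite /= inordK.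
Qed.

Lemma B2 : Bstr 1 (fun z : W 2 => [:: rot2 z]).
Proof.
split; [by [] | | | ].
- move=> z1 z2 /= e; rewrite (W2E z1) (W2E z2).
  have := congr1 (fun t : W 2 => tnth t (inord 0)) e.
  have := congr1 (fun t : W 2 => tnth t (inord 1)) e.
  by rewrite /rot2 !(tnth_nth false) /= !inordK //= => -> /(congr1 negb); rewrite !negbK => ->.

- move=> z; rewrite (W2E z) /ok_path /rot2 !(tnth_nth false) /= !inordK //=.
  by case: (nth false z 0); case: (nth false z 1).
- move=> x y; rewrite (W2E x) (W2E y) !(tnth_nth false) /= !inordK //=.
  set a := nth false x 0; set b := nth false x 1; set c := nth false y 0; set d := nth false y 1.
  move=> h.
  have -> : \sum_(z : W 2) covers [:: z; rot2 z] [tuple a; b] [tuple c; d] =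
    \sum_(z : W 2) ((z == [tuple a; b]) && (rot2 z == [tuple c; d]) : nat)
    + \sum_(z : W 2) ((z == [tuple c; d]) && (rot2 z == [tuple a; b]) : nat).
    rewrite -big_split /=; apply: eq_bigr => z _.
    rewrite /covers /covP /= !inE !xpair_eqE.
    rewrite /covers /covP /=.
    rewrite [[tuple a; b] == z]eq_sym [[tuple c; d] == z]eq_sym.
    rewrite [[tuple c; d] == rot2 z]eq_sym [[tuple a; b] == rot2 z]eq_sym.
    case: (z =P [tuple a; b]) => [e1|_]; case: (z =P [tuple c; d]) => [e2|_] /=.
    - by move: h; rewrite -e1 -e2 cb_irr.
    - by rewrite orbF addn0.
    - by [].
    - by [].
  rewrite (bigD1 [tuple a; b]) //= (eqxx [tuple a; b]) big1 => [|z /negbTE -> //].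
  rewrite (bigD1 [tuple c; d]) //= (eqxx [tuple c; d]) big1 => [|z /negbTE -> //].
  move: h; rewrite /rot2 !(tnth_nth false) /= !inordK //=.
  by case: a; case: b; case: c; case: d.
Qed.

Lemma Bexists k : exists G : W (k.*2) -> seq (W (k.*2)), Bstr k G.
Proof.
elim: k => [|k [G HG]]; first by exists (fun _ => [::]); exact: B0.
exists (Gab (fun z : W 2 => [:: rot2 z]) G); exact: (Bprod B2 HG).
Qed.

Lemma count_allp (T : finType) (U V : eqType) (P : pred V) (f : T -> U -> V) (s : seq U) :
  count P [seq f z R | z <- enum {: T}, R <- s] = \sum_(z : T) \sum_(R <- s) P (f z R).
Proof.
rewrite count_flatten -map_comp sumnE big_map big_enum /=; apply: eq_bigr => z _.
by rewrite count_map count_sum.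
Qed.

Lemma last_in (T : eqType) (r0 : T) R : R != [::] -> last r0 R \in R.
Proof. by case: R => //= r R _; apply: mem_last. Qed.

Section Main.
Variables (A b k m : nat) (G : W A -> seq (W A)) (Rs Ls : seq (seq (W b))).
Hypotheses (HG : Bstr k G)
  (okRL : forall p, p \in Rs ++ Ls -> ok_path (@cb b) p)
  (cvRL : forall x y, cb x y -> count (fun p => covers p x y) (Rs ++ Ls) = 1)
  (szR : forall R, R \in Rs -> size R + k.*2 = m.+1 /\ 1 < size R)
  (endR : forall y, count (fun R => head y R == y) Rs + count (fun R => last y R == y) Rs = 1)
  (szL : forall L, L \in Ls -> size L = m.+1).

Definition xe z := last z (G z).
Definition gl z (R : seq (W b)) : seq (W (A + b)) :=
  if R is r0 :: R' then map (jn^~ r0) (z :: G z) ++ map (jn (xe z)) R'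
                           ++ map (jn^~ (last r0 R')) (G (xe z))
  else [::].
Definition mS := [seq gl z R | z <- enum {: W A}, R <- Rs]
                 ++ [seq map (jn x) L | x <- enum {: W A}, L <- Ls].

Lemma gl_pairs z r0 R' : pairs (gl z (r0 :: R')) =
  pairs (map (jn^~ r0) (z :: G z)) ++ pairs (map (jn (xe z)) (r0 :: R'))
  ++ pairs (map (jn^~ (last r0 R')) (xe z :: G (xe z))).
Proof.
rewrite /gl /= -cat_cons pairs_glue (last_map (jn^~ r0)) -/(xe z).
by rewrite -cat_cons pairs_glue (last_map (jn (xe z))).
Qed.

Lemma gl_cov z r0 R' u v : covers (gl z (r0 :: R')) u v =
  [|| covers (map (jn^~ r0) (z :: G z)) u v, covers (map (jn (xe z)) (r0 :: R')) u v
    | covers (map (jn^~ (last r0 R')) (xe z :: G (xe z))) u v].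
Proof. by rewrite /covers gl_pairs !covP_cat. Qed.

Lemma xe_inj : injective xe.
Proof. by case: HG. Qed.

Lemma main_size p : p \in mS -> size p = m.+1.
Proof.
rewrite mem_cat => /orP [] /allpairsP [[z R] /= [_ hR ->]].
  case: (szR hR) => <- h1; case: R hR h1 => //= r0 R' _ _.
  case: HG => sG _ _ _; rewrite !size_cat !size_map !sG /= -addnn; lia.
by rewrite size_map szL.
Qed.

Lemma main_ok p : p \in mS -> ok_path (@cb (A + b)) p.
Proof.
case: HG => sG iG okG cvG.
rewrite mem_cat => /orP [] /allpairsP [[z R] /= [_ hR ->]]; last first.
  by rewrite ok_col; apply: okRL; rewrite mem_cat hR orbT.
have okR : ok_path (@cb b) R by apply: okRL; rewrite mem_cat hR.
case: (szR hR) => _; case: R hR okR => //= r0 R' hR okR hs.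
have R'n : R' != [::] by case: R' hs {hR okR}.
have o1 : ok_path (@cb (A + b)) (map (jn^~ r0) (z :: G z)) by rewrite ok_layer.
have o2 : ok_path (@cb (A + b)) (map (jn (xe z)) (r0 :: R')) by rewrite ok_col.
have o3 : ok_path (@cb (A + b)) (map (jn^~ (last r0 R')) (xe z :: G (xe z))) by rewrite ok_layer.
rewrite /ok_path gl_pairs !all_cat.
move: (o1) (o2) (o3) => /andP [u1 ->] /andP [u2 ->] /andP [u3 ->]; rewrite !andbT.
move: okR => /andP [] /= /andP [r0R' _] _.
have ylr : last r0 R' != r0.
  by apply: contraNneq r0R' => <-; apply: last_in.
have xG : xe z \notin G (xe z) by move: (okG (xe z)) => /andP [] /= /andP [].
move: u2 u3 => /= /andP [_ u2] /andP [_ u3].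
change (uniq (map (jn^~ r0) (z :: G z) ++ map (jn (xe z)) R' ++ map (jn^~ (last r0 R')) (G (xe z)))).
rewrite cat_uniq u1 cat_uniq u2 u3 /= andbT; apply/andP; split.
  apply/hasPn => w; rewrite mem_cat => /orP [] /mapP [w' hw' ->]; apply/negP;
    rewrite -[jn z r0 :: _]/(map (jn^~ r0) (z :: G z)) => /mapP [x' _ /jn_inj [_ e]].
    by move: r0R'; rewrite -e hw'.
  by move: ylr; rewrite e eqxx.
apply/hasPn => w /mapP [w' hw' ->]; apply/negP => /mapP [y' _ /jn_inj [e _]].
by move: hw'; rewrite e (negbTE xG).
Qed.

Lemma main_cov u v : cb u v -> count (fun p => covers p u v) mS = 1.
Proof.
case: HG => sG iG okG cvG.
rewrite /mS count_cat !count_allp.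
rewrite -(jnK u) -(jnK v); set x1 := lp u; set y1 := rp u; set x2 := lp v; set y2 := rp v.
rewrite cb_jn => /orP [] /andP [h1 h2].
- move/eqP: h2 => e; rewrite -e.
  have nx : x1 != x2 by apply: contraTneq h1 => ->; rewrite cb_irr.
  set c := fun w => covers (w :: G w) x1 x2.
  rewrite [X in _ + X]big1 ?addn0 => [|x _]; last first.
    rewrite big1_seq // => L _; rewrite cov_col.
    by case: (x1 =P x) => //= ex; rewrite -ex eq_sym (negbTE nx).
  have key : forall z R, R \in Rs -> covers (gl z R) (jn x1 y1) (jn x2 y1) =
      (head y1 R == y1) * c z + (last y1 R == y1) * c (xe z) :> nat.
    move=> z R hR; case: (szR hR) => _; have := okRL (p := R); rewrite mem_cat hR => /(_ isT).
    case: R hR => //= r0 R' hR okR hs.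
    have R'n : R' != [::] by case: R' hs {hR okR}.
    move: okR => /andP [] /= /andP [r0R' _] _.
    have ylr : last r0 R' != r0 by apply: contraNneq r0R' => <-; apply: last_in.
    rewrite gl_cov cov_layer cov_col cov_layer /= !andbA !andbb.
    have -> : (x1 == xe z) && (x2 == xe z) = false.
      by case: (x1 =P _) => //= <-; rewrite eq_sym (negbTE nx).
    rewrite /= [r0 == y1]eq_sym [last r0 R' == y1]eq_sym.
    case: (y1 =P r0) => [er|nr] /=; case: (y1 =P last r0 R') => [el|nl] //=.
    - by move: ylr; rewrite -el -er eqxx.
    - by rewrite orbF mul1n mul0n addn0.
    - by rewrite mul0n add0n mul1n.
  under eq_bigr => z _ do rewrite (eq_big_seq _ (key z)).
  rewrite exchange_big /=.
  have s1 : \sum_z c z = 1 by apply: cvG.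
  have s2 : \sum_z c (xe z) = 1.
    by rewrite -s1 [RHS](reindex_inj xe_inj).
  under eq_bigr => R _ do rewrite big_split /= -!big_distrr /= s1 s2 !muln1.
  rewrite big_split /= -!count_sum; exact: endR.
- move/eqP: h1 => e; rewrite -e.
  have ny : y1 != y2 by apply: contraTneq h2 => ->; rewrite cb_irr.
  have key : forall z R, R \in Rs -> covers (gl z R) (jn x1 y1) (jn x1 y2) =
      (xe z == x1) * covers R y1 y2 :> nat.
    move=> z R hR; case: (szR hR) => _.
    case: R hR => //= r0 R' hR hs.
    rewrite gl_cov cov_layer cov_col cov_layer /=.
    have -> : [&& y1 == r0, y2 == r0 & covers (z :: G z) x1 x1] = false.
      by case: (y1 =P _) => //= <-; rewrite eq_sym (negbTE ny).
    have -> : [&& y1 == last r0 R', y2 == last r0 R' & covers (xe z :: G (xe z)) x1 x1] = false.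
      by case: (y1 =P _) => //= <-; rewrite eq_sym (negbTE ny).
    by rewrite /= orbF andbA andbb eq_sym; case: (_ == _); case: (covers _ _ _).
  under eq_bigr => z _ do rewrite (eq_big_seq _ (key z)).
  have long : \sum_x \sum_(L <- Ls) covers (map (jn x) L) (jn x1 y1) (jn x1 y2)
      = \sum_(L <- Ls) covers L y1 y2.
    rewrite exchange_big /=; apply: eq_bigr => L _.
    rewrite (bigD1 x1) //= cov_col !eqxx /= big1 ?addn0 // => x nx.
    by rewrite cov_col eq_sym (negbTE nx).
  rewrite long exchange_big /=.
  under eq_bigr => R _ do rewrite -big_distrl /= (sum_inj_eq1 _ xe_inj) mul1n.
  by rewrite -!count_sum -count_cat; apply: cvRL.
Qed.
End Main.

Section ToDefs.
Variable n : nat.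
Definition phi (w : W n) : {ffun 'I_n -> bool} := [ffun i => tnth w i].
Definition psi (f : {ffun 'I_n -> bool}) : W n := [tuple f i | i < n].
Lemma phiK f : phi (psi f) = f.
Proof. by apply/ffunP => i; rewrite !ffunE tnth_mktuple. Qed.
Lemma phi_inj : injective phi.
Proof. by move=> x y /ffunP e; apply: eq_from_tnth => i; move: (e i); rewrite !ffunE. Qed.

Lemma zip_map2 (I U V : Type) (f : I -> U) (g : I -> V) s :
  zip (map f s) (map g s) = map (fun i => (f i, g i)) s.
Proof. by elim: s => //= i s ->. Qed.

Lemma cube_phi x y : cube_rel n (phi x) (phi y) = cb x y.
Proof.
rewrite /cube_rel /cb /hd1 /ndiff -(map_tnth_enum x) -(map_tnth_enum y) zip_map2 count_map.
rewrite count_sum big_enum /= -sum1_card big_mkcond /=.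
congr (_ == 1); apply: eq_bigr => i _; rewrite inE !ffunE.
by case: (_ != _).
Qed.
End ToDefs.

Lemma set2_eq (T : finType) (a b c d : T) : [set a; b] = [set c; d] ->
  (a = c /\ b = d) \/ (a = d /\ b = c).
Proof.
move=> E.
have ha : a \in [set c; d] by rewrite -E set21.
have hb : b \in [set c; d] by rewrite -E set22.
have hc : c \in [set a; b] by rewrite E set21.
have hd : d \in [set a; b] by rewrite E set22.
move/set2P: ha => [] ea; move/set2P: hb => [] eb; subst; auto.
- by move/set2P: hd => [] ->; auto.
- by move/set2P: hc => [] ->; auto.
Qed.

Lemma imset_set2 (T U : finType) (f : T -> U) (a b : T) : f @: [set a; b] = [set f a; f b].
Proof. by rewrite imsetU1 imset_set1. Qed.

Section ToDiv.
Variables (n m : nat).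
Definition w0 : W n := [tuple of nseq n false].
Definition fp (p : seq (W n)) : {ffun 'I_m.+1 -> {ffun 'I_n -> bool}} :=
  [ffun i : 'I_m.+1 => phi (nth w0 p i)].

Lemma pairs_adj p (i j : 'I_m.+1) : size p = m.+1 -> i.+1 = j ->
  (nth w0 p i, nth w0 p j) \in pairs p.
Proof.
move=> sp e; have hi : i < m by rewrite -ltnS e ltn_ord.
by rewrite -e -(nth_pairs w0) ?sp //; apply: mem_nth; rewrite size_pairs sp.
Qed.

Lemma edge_img p x y : size p = m.+1 ->
  ([set phi x; phi y] \in edge_image (fp p) (edges (path_rel m))) = covers p x y.
Proof.
move=> sp; apply/idP/idP.
- case/imsetP => A /imset2P [i j _]; rewrite inE /path_rel => hij -> {A}.
  rewrite imset_set2 !ffunE => /set2_eq [[/phi_inj ex /phi_inj ey]|[/phi_inj ex /phi_inj ey]];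
    rewrite /covers /covP; case/orP: hij => /eqP e.
  all: try (apply/orP; left; rewrite ex ey; apply: pairs_adj; done).
  all: try (apply/orP; right; rewrite ex ey; apply: pairs_adj; done).
- have key : forall a b, (a, b) \in pairs p ->
    [set phi a; phi b] \in edge_image (fp p) (edges (path_rel m)).
    move=> a b /(mem_pairs w0) [i]; rewrite sp /= => hi [-> ->].
    have hi1 : i < m.+1 by apply: ltnW.
    apply/imsetP; exists [set Ordinal hi1; Ordinal (hi : i.+1 < m.+1)].
      by apply/imset2P; apply: (Imset2spec (x1 := Ordinal hi1) (x2 := Ordinal (hi : i.+1 < m.+1))) => //;
        rewrite inE /path_rel /= eqxx.
    by rewrite imset_set2 !ffunE.
  rewrite /covers /covP => /orP [/key // | /key h].
  by rewrite setUC.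
Qed.

Lemma to_divides (S : seq (seq (W n))) :
  (forall p, p \in S -> ok_path (@cb n) p) ->
  (forall x y, cb x y -> count (fun p => covers p x y) S = 1) ->
  (forall p, p \in S -> size p = m.+1) ->
  divides (path_rel m) (cube_rel n).
Proof.
move=> okS cvS szS; exists (map fp S); split.
- move=> g /mapP [p hp ->]; have := okS p hp; have := szS p hp.
  move=> sp /andP [up ap]; split.
  + move=> i j; rewrite !ffunE => /phi_inj /eqP.
    by rewrite nth_uniq ?sp // => /eqP /val_inj.
  + move=> i j; rewrite !ffunE cube_phi /path_rel => /orP [] /eqP e.
    * by move/allP: ap => /(_ _ (pairs_adj sp e)).
    * by rewrite cb_sym; move/allP: ap => /(_ _ (pairs_adj sp e)).
- move=> E /imset2P [a b _]; rewrite inE => hab ->.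
  rewrite -(phiK a) -(phiK b) cube_phi in hab *.
  rewrite count_map -(cvS _ _ hab); apply: eq_in_count => p hp /=.
  by rewrite edge_img // szS.
Qed.
End ToDiv.

Fixpoint allbits n : seq (seq bool) :=
  if n is n'.+1 then [seq b :: w | b <- [:: false; true], w <- allbits n'] else [:: [::]].

Lemma mem_allbits n (w : seq bool) : size w = n -> w \in allbits n.
Proof.
elim: n w => [|n IH] [|c w] // [] /IH h.
by apply/allpairsP; exists (c, w); split => //; case: c.
Qed.

Fixpoint beq (x y : seq bool) : bool :=
  match x, y with
  | [::], [::] => true
  | a :: x', b :: y' => if a then (if b then beq x' y' else false) else (if b then false else beq x' y')
  | _, _ => false
  end.

Lemma beqE x y : beq x y = (x == y).
Proof. by elim: x y => [|a x IH] [|c y] //=; rewrite eqseq_cons IH; case: a; case: c. Qed.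

Definition cov2 (P : seq (seq bool * seq bool)) x y :=
  has (fun c => (beq c.1 x && beq c.2 y) || (beq c.1 y && beq c.2 x)) P.

Lemma cov2E P x y : cov2 P x y = covP P x y.
Proof.
rewrite /cov2 /covP; elim: P => [|[c d] P IH] //=.
rewrite IH !inE !beqE !xpair_eqE ![_ == c]eq_sym ![_ == d]eq_sym.
by case: (c == x); case: (d == y); case: (c == y); case: (d == x); case: ((x, y) \in P); case: ((y, x) \in P).
Qed.

Definition touch x (c : seq bool * seq bool) := beq c.1 x || beq c.2 x.

Lemma has_filter_sub (T : Type) (a b : pred T) s : (forall c, a c -> b c) ->
  has a (filter b s) = has a s.
Proof.
move=> ab; elim: s => //= c s IH; case: ifP => bc /=; rewrite IH //.
by case ac: (a c) => //; rewrite (ab _ ac) in bc.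
Qed.

Lemma cov2_filter P x y : cov2 (filter (touch x) P) x y = cov2 P x y.
Proof.
apply: has_filter_sub => c; rewrite /touch.
by case/orP => /andP [h1 h2]; [rewrite h1 | rewrite h2 orbT].
Qed.

Lemma count_PSx (PS : seq (seq (seq bool * seq bool))) x y :
  count (fun P => cov2 P x y) (filter (fun P => ~~ nilp P) [seq filter (touch x) P | P <- PS])
  = count (fun P => cov2 P x y) PS.
Proof.
rewrite count_filter count_map; apply: eq_count => P /=.
rewrite -(cov2_filter P x y); case: (filter (touch x) P) => [|c P'] //=.
by rewrite andbT.
Qed.

Definition chkS n (VS : seq (seq (seq bool))) :=
  all (fun p => uniq p && all (fun c => hd1 c.1 c.2) (pairs p)) VS &&
  (let PS := map (@pairs _) VS in
   all (fun x => let PSx := filter (fun P => ~~ nilp P) [seq filter (touch x) P | P <- PS] in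
     all (fun y => if hd1 x y then count (fun P => cov2 P x y) PSx == 1 else true)
                     (allbits n)) (allbits n)).

Lemma chkS_ok n (S : seq (seq (W n))) : chkS n (map (map val) S) ->
  (forall p, p \in S -> ok_path (@cb n) p) /\
  (forall x y, cb x y -> count (fun p => covers p x y) S = 1).
Proof.
case/andP => /allP h1 /allP h2; split.
- move=> p hp; have /andP [u a] := h1 _ (map_f _ hp).
  rewrite /ok_path -(map_inj_uniq val_inj) u /=.
  by move: a; rewrite pairs_map all_map.
- move=> x y hxy.
  have := h2 _ (mem_allbits (size_tuple x)) => /allP /(_ _ (mem_allbits (size_tuple y))).
  rewrite [hd1 _ _]hxy count_PSx => /eqP <-.
  rewrite -map_comp count_map; apply: eq_count => p /=.
  rewrite cov2E pairs_map /covers /covP.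
  have vi : injective (fun c : W n * W n => (val c.1, val c.2)).
    by move=> [a1 a2] [b1 b2] /= [/val_inj -> /val_inj ->].
  by rewrite -[(val x, val y)]/((fun c : W n * W n => (val c.1, val c.2)) (x, y))
    -[(val y, val x)]/((fun c : W n * W n => (val c.1, val c.2)) (y, x)) !(mem_map vi).
Qed.

Definition chkE n (VR : seq (seq (seq bool))) :=
  all (fun w => count (fun R => beq (head [::] R) w) VR + count (fun R => beq (last [::] R) w) VR == 1)
      (allbits n).

Lemma chkE_ok n (Rs : seq (seq (W n))) : all (fun R => 0 < size R) Rs ->
  chkE n (map (map val) Rs) ->
  forall y, count (fun R => head y R == y) Rs + count (fun R => last y R == y) Rs = 1.
Proof.
move=> /allP hs /allP h y; have := h _ (mem_allbits (size_tuple y)).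
rewrite !count_map => /eqP <-; congr addn; apply: eq_in_count => R /hs /=;
  case: R => //= r R _; rewrite beqE //.
by rewrite (last_map val).
Qed.

Lemma assemble (k m : nat) (Rs Ls : seq (seq (W 9))) :
  chkS 9 (map (map val) (Rs ++ Ls)) -> chkE 9 (map (map val) Rs) ->
  all (fun R => (size R + k.*2 == m.+1) && (1 < size R)) Rs ->
  all (fun L => size L == m.+1) Ls ->
  divides (path_rel m) (cube_rel (k.*2 + 9)).
Proof.
move=> hS hE hR hL.
have [G HG] := Bexists k.
have [okRL cvRL] := chkS_ok hS.
have szR : forall R, R \in Rs -> size R + k.*2 = m.+1 /\ 1 < size R.
  by move=> R /(allP hR) /andP [/eqP -> ->].
have hR0 : all (fun R => 0 < size R) Rs.
  by apply/allP => R /(allP hR) /andP [_ /ltnW].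
have endR := chkE_ok hR0 hE.
have szL : forall L, L \in Ls -> size L = m.+1 by move=> L /(allP hL) /eqP.
apply: (to_divides (S := mS G Rs Ls)).
- by move=> p; apply: (main_ok HG okRL szR).
- by move=> x y; apply: (main_cov HG okRL cvRL szR endR).
- by move=> p; apply: (main_size HG szR szL).
Qed.

Definition chkAll (k m : nat) (Rs Ls : seq (seq (W 9))) :=
  let VR := map (map val) Rs in let VL := map (map val) Ls in
  [&& chkS 9 (VR ++ VL), chkE 9 VR,
      all (fun R => (size R + k.*2 == m.+1) && (1 < size R)) VR
    & all (fun L => size L == m.+1) VL].

Lemma assemble2 (k m : nat) (Rs Ls : seq (seq (W 9))) :
  chkAll k m Rs Ls -> divides (path_rel m) (cube_rel (k.*2 + 9)).
Proof.
rewrite /chkAll -map_cat !all_map => /and4P [h1 h2 h3 h4].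
apply: (assemble h1 h2).
- by apply: sub_all h3 => R /=; rewrite size_map.
- by apply: sub_all h4 => L /=; rewrite size_map.
Qed.

Definition tab : seq (seq nat) := [::
[:: 2; 0; 130; 1; 6; 7; 22; 135; 9; 11; 8; 15; 13; 45; 12; 14; 48; 49; 16; 147; 52; 20; 23; 151; 25; 17; 30; 19; 156; 31; 28; 27; 33; 41; 38; 43; 37; 39; 166; 103; 42; 40; 106; 47; 172; 109; 44; 46; 50; 51; 34; 35; 53; 55; 118; 63; 24; 56; 26; 123; 62; 57; 54; 59; 68; 69; 64; 66; 4; 71; 78; 79; 73; 75; 10; 91; 72; 76; 74; 77; 82; 113; 83; 81; 86; 93; 214; 85; 89; 121; 88; 90; 84; 221; 222; 94; 32; 96; 102; 97; 108; 100; 70; 101; 105; 107; 122; 99; 236; 237; 111; 127; 80; 241; 98; 119; 112; 245; 114; 117; 104; 120; 58; 115; 116; 124; 110; 125; 129; 145; 138; 3; 133; 5; 132; 167; 128; 153; 170; 137; 142; 140; 174; 207; 146; 149; 18; 131; 144; 21; 158; 150; 136; 155; 152; 154; 220; 29; 159; 157; 168; 160; 226; 161; 36; 164; 230; 165; 169; 233; 186; 235; 188; 141; 175; 143; 240; 179; 162; 163; 181; 183; 180; 191; 176; 184; 190; 171; 60; 61; 182; 189; 194; 65; 210; 67; 198; 196; 134; 197; 202; 217; 203; 139; 205; 201; 204; 206; 212; 193; 211; 195; 148; 209; 215; 87; 208; 219; 250; 223; 92; 253; 218; 95; 192; 224; 227; 225; 229; 231; 228; 199; 200; 249; 238; 234;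 232; 173; 239; 255; 248; 177; 178; 242; 246; 213; 247; 243; 216; 185; 251; 187; 244; 252; 126; 254];
[:: 32; 9; 3; 7; 12; 1; 134; 15; 72; 137; 14; 139; 8; 5; 6; 47; 20; 19; 2; 23; 28; 17; 18; 31; 16; 57; 10; 26; 92; 25; 22; 30; 36; 97; 42; 33; 4; 101; 102; 55; 104; 43; 170; 107; 60; 41; 38; 39; 56; 53; 54; 115; 180; 21; 182; 119; 40; 49; 50; 27; 52; 29; 63; 61; 0; 64; 70; 71; 76; 68; 198; 199; 74; 105; 66; 11; 78; 13; 79; 75; 88; 89; 86; 67; 80; 81; 94; 83; 24; 73; 218; 219; 93; 95; 90; 127; 100; 65; 34; 103; 116; 69; 110; 231; 96; 233; 98; 111; 44; 77; 238; 239; 113; 117; 242; 243; 84; 85; 126; 87; 124; 125; 114; 91; 108; 109; 122; 123; 130; 161; 131; 135; 128; 149; 166; 151; 200; 201; 202; 138; 132; 133; 143; 159; 208; 177; 178; 211; 150; 148; 214; 147; 144; 157; 146; 187; 152; 189; 156; 191; 164; 169; 160; 35; 172; 37; 162; 183; 136; 173; 174; 163; 236; 45; 46; 171; 48; 185; 176; 51; 188; 165; 246; 179; 186; 153; 58; 59; 184; 181; 62; 190; 196; 129; 195; 227; 204; 193; 230; 207; 192; 203; 194; 235; 140; 141; 142; 205; 210; 145; 82; 209; 244; 197; 212; 213; 220; 216; 154; 155; 252; 217; 158; 221; 232; 229; 234; 99; 224; 237; 226; 167; 168; 225; 106; 251; 228; 253; 206; 175; 112; 245; 250; 241; 240; 247;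 118; 215; 120; 121; 254; 255; 248; 249; 222; 223];
[:: 8; 129; 6; 35; 5; 69; 7; 71; 40; 41; 138; 3; 76; 9; 78; 13; 144; 81; 50; 18; 4; 85; 86; 21; 152; 27; 154; 155; 24; 28; 14; 15; 160; 1; 32; 39; 100; 33; 36; 38; 44; 57; 10; 11; 45; 61; 42; 63; 112; 177; 178; 55; 48; 37; 52; 54; 184; 121; 59; 51; 124; 60; 58; 127; 72; 67; 2; 99; 196; 77; 68; 70; 104; 65; 75; 203; 204; 93; 206; 95; 16; 209; 90; 19; 20; 84; 87; 23; 92; 217; 26; 89; 94; 29; 30; 91; 224; 225; 96; 115; 228; 117; 103; 111; 108; 97; 110; 106; 109; 105; 46; 47; 120; 49; 82; 114; 118; 125; 119; 247; 56; 113; 123; 107; 126; 253; 62; 255; 0; 137; 194; 195; 148; 135; 130; 199; 140; 141; 136; 131; 12; 143; 134; 139; 145; 17; 210; 146; 156; 151; 22; 215; 216; 25; 158; 147; 157; 149; 142; 31; 128; 165; 34; 227; 166; 133; 174; 163; 170; 171; 162; 43; 168; 172; 190; 167; 180; 176; 186; 187; 244; 53; 150; 182; 248; 169; 250; 185; 189; 173; 254; 175; 64; 192; 66; 193; 132; 229; 214; 198; 201; 73; 74; 207; 200; 197; 222; 79; 80; 241; 218; 83; 213; 221; 246; 223; 88; 153; 219; 211; 212; 205; 220; 159; 240; 161; 98; 231; 164; 101; 102; 239; 234; 237; 202; 233; 252; 236; 230; 235; 208; 249; 226; 179; 116; 181; 242; 183; 232; 251; 122; 243; 188; 245; 238; 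191];
[:: 4; 17; 34; 19; 132; 21; 70; 39; 136; 73; 2; 10; 44; 141; 142; 79; 0; 16; 26; 51; 22; 29; 54; 7; 8; 9; 24; 11; 12; 13; 62; 95; 48; 161; 35; 99; 52; 5; 6; 167; 32; 105; 58; 42; 36; 37; 14; 45; 49; 33; 114; 50; 116; 61; 38; 23; 60; 59; 56; 43; 28; 125; 46; 31; 80; 1; 82; 3; 84; 197; 86; 103; 200; 77; 90; 67; 92; 205; 110; 111; 81; 65; 18; 91; 212; 69; 118; 71; 72; 25; 122; 27; 124; 89; 78; 87; 64; 113; 66; 98; 68; 97; 100; 119; 106; 121; 74; 75; 76; 101; 108; 109; 96; 115; 112; 83; 117; 53; 102; 127; 88; 123; 120; 251; 252; 93; 94; 126; 192; 131; 146; 163; 164; 129; 135; 143; 137; 169; 154; 155; 156; 157; 138; 15; 128; 153; 150; 145; 20; 213; 134; 183; 184; 152; 186; 159; 188; 221; 30; 151; 176; 177; 130; 162; 180; 173; 182; 166; 40; 41; 171; 139; 140; 175; 172; 47; 144; 181; 179; 147; 148; 149; 178; 55; 168; 57; 187; 191; 190; 185; 158; 63; 208; 201; 226; 199; 228; 133; 194; 215; 216; 233; 206; 195; 236; 237; 198; 223; 209; 217; 242; 243; 196; 85; 210; 211; 218; 249; 202; 203; 204; 220; 214; 222; 160; 193; 224; 235; 244; 165; 231; 247; 104; 232; 170; 107; 238; 239; 174; 207; 241; 225; 240; 227; 245; 229; 230; 255; 250; 248; 234; 219; 254; 189; 246; 253]].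

Definition hh (i v : nat) := nth 0 (nth [::] tab i) v.
Fixpoint walk (v : nat) (ds : seq nat) : seq nat :=
  if ds is i :: ds' then v :: walk (hh i v) ds' else [:: v].
Definition Rpath j1 j2 z := let L0 := walk z [:: 0; 1; 2; 3] in
  drop j1 L0 ++ take (5 - j2) (map (addn 256) (walk (last z L0) [:: 0; 1; 2; 3])).
Definition cycpaths m i off := let c := walk 0 (nseq 256 i) in
  [seq map (addn off) (take m.+1 (drop (k * m) c)) | k <- iota 0 (256 %/ m)].
Fixpoint bitsn (n v : nat) : seq bool := if n is n'.+1 then odd v :: bitsn n' v./2 else [::].
Lemma size_bitsn n v : size (bitsn n v) == n.
Proof. by elim: n v => //= n IH v; rewrite eqSS IH. Qed.
Definition toW (v : nat) : W 9 := Tuple (size_bitsn 9 v).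
Definition RsD j1 j2 : seq (seq (W 9)) := map (map toW) [seq Rpath j1 j2 z | z <- iota 0 256].
Definition LsD j1 j2 m : seq (seq (W 9)) := map (map toW)
  (flatten [seq cycpaths m i 0 | i <- iota 0 j1] ++ flatten [seq cycpaths m i 256 | i <- iota (4 - j2) j2]).
Lemma c_16_1 : divides (path_rel 16) (cube_rel (4.*2 + 9)).
Proof. apply: (@assemble2 4 16 (RsD 1 0) (LsD 1 0 16)); by vm_compute. Qed.
Lemma c_16_3 : divides (path_rel 16) (cube_rel (5.*2 + 9)).
Proof. apply: (@assemble2 5 16 (RsD 3 0) (LsD 3 0 16)); by vm_compute. Qed.
Lemma c_16_5 : divides (path_rel 16) (cube_rel (6.*2 + 9)).
Proof. apply: (@assemble2 6 16 (RsD 4 1) (LsD 4 1 16)); by vm_compute. Qed.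
Lemma c_16_7 : divides (path_rel 16) (cube_rel (7.*2 + 9)).
Proof. apply: (@assemble2 7 16 (RsD 4 3) (LsD 4 3 16)); by vm_compute. Qed.
Lemma c_32_1 : divides (path_rel 32) (cube_rel (12.*2 + 9)).
Proof. apply: (@assemble2 12 32 (RsD 1 0) (LsD 1 0 32)); by vm_compute. Qed.
Lemma c_32_3 : divides (path_rel 32) (cube_rel (13.*2 + 9)).
Proof. apply: (@assemble2 13 32 (RsD 3 0) (LsD 3 0 32)); by vm_compute. Qed.
Lemma c_32_5 : divides (path_rel 32) (cube_rel (14.*2 + 9)).
Proof. apply: (@assemble2 14 32 (RsD 4 1) (LsD 4 1 32)); by vm_compute. Qed.
Lemma c_32_7 : divides (path_rel 32) (cube_rel (15.*2 + 9)).
Proof. apply: (@assemble2 15 32 (RsD 4 3) (LsD 4 3 32)); by vm_compute. Qed.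
Lemma c_64_1 : divides (path_rel 64) (cube_rel (28.*2 + 9)).
Proof. apply: (@assemble2 28 64 (RsD 1 0) (LsD 1 0 64)); by vm_compute. Qed.
Lemma c_64_3 : divides (path_rel 64) (cube_rel (29.*2 + 9)).
Proof. apply: (@assemble2 29 64 (RsD 3 0) (LsD 3 0 64)); by vm_compute. Qed.
Lemma c_64_5 : divides (path_rel 64) (cube_rel (30.*2 + 9)).
Proof. apply: (@assemble2 30 64 (RsD 4 1) (LsD 4 1 64)); by vm_compute. Qed.
Lemma c_64_7 : divides (path_rel 64) (cube_rel (31.*2 + 9)).
Proof. apply: (@assemble2 31 64 (RsD 4 3) (LsD 4 3 64)); by vm_compute. Qed.
Lemma c_128_1 : divides (path_rel 128) (cube_rel (60.*2 + 9)).
Proof. apply: (@assemble2 60 128 (RsD 1 0) (LsD 1 0 128)); by vm_compute. Qed.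
Lemma c_128_3 : divides (path_rel 128) (cube_rel (61.*2 + 9)).
Proof. apply: (@assemble2 61 128 (RsD 3 0) (LsD 3 0 128)); by vm_compute. Qed.
Lemma c_128_5 : divides (path_rel 128) (cube_rel (62.*2 + 9)).
Proof. apply: (@assemble2 62 128 (RsD 4 1) (LsD 4 1 128)); by vm_compute. Qed.
Lemma c_128_7 : divides (path_rel 128) (cube_rel (63.*2 + 9)).
Proof. apply: (@assemble2 63 128 (RsD 4 3) (LsD 4 3 128)); by vm_compute. Qed.

Theorem lemma10 (t s : nat) :
  t \in [:: 4; 5; 6; 7] -> s \in [:: 1; 3; 5; 7] ->
  divides (path_rel (2 ^ t)) (cube_rel (2 ^ t + s)).
Proof.
rewrite !inE => /or4P [] /eqP -> /or4P [] /eqP ->.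
- exact: c_16_1.
- exact: c_16_3.
- exact: c_16_5.
- exact: c_16_7.
- exact: c_32_1.
- exact: c_32_3.
- exact: c_32_5.
- exact: c_32_7.
- exact: c_64_1.
- exact: c_64_3.
- exact: c_64_5.
- exact: c_64_7.
- exact: c_128_1.
- exact: c_128_3.
- exact: c_128_5.
- exact: c_128_7.
Qed.
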